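(* The Schubert cell $S_{w_0,z_2}$ is the disjoint union of exactly four $G$-orbits of points $(P,Pw_0,Pz_2n)$: $n=n(0,1,1)$, dimension $8$, trivial stabilizer; $n=n(0,0,1)$, dimension $7$, stabilizer $\{d(1/a^2,a,a):a\in\mathbb{R}^\times\}$; $n=n(0,1,0)$, dimension $7$, stabilizer $\{d(a,1/a^2,a):a\in\mathbb{R}^\times\}$; $n=n(0,0,0)$, dimension $6$, stabilizer $D$.
   Context: $G=\mathrm{SL}_3(\mathbb{R})$, $P$ the upper triangular matrices in $G$, $D$ the diagonal matrices in $G$; $G$ acts on $X=(P\backslash G)^3$ by right multiplication in each coordinate. $n(x,y,z)=\begin{pmatrix}1&x&y\\0&1&z\\0&0&1\end{pmatrix}$, $d(a,b,c)=\operatorname{diag}(a,b,c)$. $w_0=\begin{pmatrix}0&0&-1\\0&-1&0\\-1&0&0\end{pmatrix}$, $z_2=\begin{pmatrix}0&0&1\\-1&0&0\\0&-1&0\end{pmatrix}$. $S_{v,w}=\big(\{P\}\times P\backslash PvP\times P\backslash PwP\big)\cdot G$. The stabilizer of $(P,Pv,Pwn)$ is $P\cap v^{-1}Pv\cap (wn)^{-1}P(wn)$. *)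

(* Defs.v *)
From HB Require Import structures.
From mathcomp Require Import all_boot all_order all_algebra.
From mathcomp Require Import reals.
Set Implicit Arguments. Unset Strict Implicit. Unset Printing Implicit Defensive.
Import Order.TTheory GRing.Theory Num.Theory.
Local Open Scope ring_scope.

Section Defs.
Variable R : realType.
Notation M3 := 'M[R]_3.

Definition inG (g : M3) : Prop := \det g = 1.
Definition upper (A : M3) : Prop := forall i j : 'I_3, (j < i)%N -> A i j = 0.
Definition inP (p : M3) : Prop := inG p /\ upper p.
Definition dmx (a b c : R) : M3 :=
  \matrix_(i < 3, j < 3)
    if i == j then (match nat_of_ord i with 0 => a | 1 => b | _ => c end) else 0.
Definition inD (h : M3) : Prop := exists a b c : R, a * b * c = 1 /\ h = dmx a b c.

Definition nmx (x y z : R) : M3 :=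
  \matrix_(i < 3, j < 3)
    match nat_of_ord i, nat_of_ord j with
    | 0, 1 => x | 0, 2 => y | 1, 2 => z
    | _, _ => if i == j then 1 else 0 end.

Definition w0 : M3 := \matrix_(i < 3, j < 3) if (i + j == 2)%N then -1 else 0.
Definition z2 : M3 :=
  \matrix_(i < 3, j < 3)
    match nat_of_ord i, nat_of_ord j with
    | 0, 2 => 1 | 1, 0 => -1 | 2, 1 => -1 | _, _ => 0 end.

(* Cosets P g, g in G: P g = P g'  iff  g' g^{-1} in P *)
Definition coset_eq (g g' : M3) : Prop := inP (g' *m invmx g).

(* A point of X = (P\G)^3 is represented by a triple of elements of G. *)
Definition triple := (M3 * M3 * M3)%type.
Definition t1 (x : triple) := x.1.1.
Definition t2 (x : triple) := x.1.2.
Definition t3 (x : triple) := x.2.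
Definition in_X (x : triple) : Prop := [/\ inG (t1 x), inG (t2 x) & inG (t3 x)].

Definition X_eq (x y : triple) : Prop :=
  [/\ coset_eq (t1 x) (t1 y), coset_eq (t2 x) (t2 y) & coset_eq (t3 x) (t3 y)].
Definition act (x : triple) (h : M3) : triple :=
  (t1 x *m h, t2 x *m h, t3 x *m h).

Definition same_orbit (x y : triple) : Prop :=
  exists h, inG h /\ X_eq (act x h) y.

Definition stab (x : triple) (h : M3) : Prop := inG h /\ X_eq (act x h) x.

(* S_{v,w} = ({P} x P\PvP x P\PwP) . G *)
Definition in_S (v w : M3) (x : triple) : Prop :=
  in_X x /\
  exists p q h, [/\ inP p, inP q, inG h & X_eq (act (1%:M, v *m p, w *m q) h) x].

(* Lie algebra of the stabilizer of x = (P g1, P g2, P g3), i.e. of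
   the intersection of the g_i^{-1} P g_i:  Y in sl_3 with g_i Y g_i^{-1} in Lie(P) *)
Definition lie_stab (x : triple) (Y : M3) : Prop :=
  [/\ \tr Y = 0, upper (t1 x *m Y *m invmx (t1 x)),
      upper (t2 x *m Y *m invmx (t2 x)) & upper (t3 x *m Y *m invmx (t3 x))].

(* the orbit x.G has dimension d : d = dim G - dim Stab = 8 - dim Lie(Stab) *)
Definition orbit_dim (x : triple) (d : nat) : Prop :=
  exists s : seq 'M[R]_(3, 3),
    [/\ free s, (size s + d = 8)%N & forall Y, lie_stab x Y <-> Y \in <<s>>%VS].
End Defs.

(* Main.v *)
Require Import Defs.
From HB Require Import structures.
From mathcomp Require Import all_boot all_order all_algebra.
From mathcomp Require Import reals ring lra.
Import Order.TTheory GRing.Theory Num.Theory.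
Local Open Scope ring_scope.

Set Implicit Arguments. Unset Strict Implicit.
Section S.
Variable R : realType.
Definition mk3 (a00 a01 a02 a10 a11 a12 a20 a21 a22 : R) : 'M[R]_3 :=
  \matrix_(i < 3, j < 3)
    match nat_of_ord i, nat_of_ord j with
    | 0, 0 => a00 | 0, 1 => a01 | 0, _ => a02
    | 1, 0 => a10 | 1, 1 => a11 | 1, _ => a12
    | _, 0 => a20 | _, 1 => a21 | _, _ => a22 end.
Notation o0 := (@Ordinal 3 0 isT).
Notation o1 := (@Ordinal 3 1 isT).
Notation o2 := (@Ordinal 3 2 isT).

Lemma mul_mk3 a00 a01 a02 a10 a11 a12 a20 a21 a22 b00 b01 b02 b10 b11 b12 b20 b21 b22 :
  mk3 a00 a01 a02 a10 a11 a12 a20 a21 a22 *m mk3 b00 b01 b02 b10 b11 b12 b20 b21 b22 =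
  mk3 (a00*b00+a01*b10+a02*b20) (a00*b01+a01*b11+a02*b21) (a00*b02+a01*b12+a02*b22)
      (a10*b00+a11*b10+a12*b20) (a10*b01+a11*b11+a12*b21) (a10*b02+a11*b12+a12*b22)
      (a20*b00+a21*b10+a22*b20) (a20*b01+a21*b11+a22*b21) (a20*b02+a21*b12+a22*b22).
Proof.
apply/matrixP => i j; rewrite !mxE !big_ord_recl big_ord0 !mxE addr0 addrA.
by case: i => [[|[|[|i]]] Hi] //; case: j => [[|[|[|j]]] Hj].
Qed.

Lemma det_mk3 a00 a01 a02 a10 a11 a12 a20 a21 a22 :
  \det (mk3 a00 a01 a02 a10 a11 a12 a20 a21 a22) =
  a00*(a11*a22 - a12*a21) - a01*(a10*a22-a12*a20) + a02*(a10*a21-a11*a20).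
Proof.
rewrite (expand_det_row _ ord0) !big_ord_recl big_ord0 /cofactor.
rewrite !(expand_det_row _ ord0) !big_ord_recl !big_ord0 /cofactor !det_mx11 !mxE /=.
rewrite /bump /=; ring.
Qed.

Lemma mk3E (A : 'M[R]_3) :
  A = mk3 (A o0 o0) (A o0 o1) (A o0 o2) (A o1 o0) (A o1 o1) (A o1 o2) (A o2 o0) (A o2 o1) (A o2 o2).
Proof.
apply/matrixP => i j; rewrite mxE.
by case: i => [[|[|[|i]]] Hi] //; case: j => [[|[|[|j]]] Hj] //=; congr (A _ _); apply: val_inj.
Qed.

Lemma mk3_inj a00 a01 a02 a10 a11 a12 a20 a21 a22 b00 b01 b02 b10 b11 b12 b20 b21 b22 :
  mk3 a00 a01 a02 a10 a11 a12 a20 a21 a22 = mk3 b00 b01 b02 b10 b11 b12 b20 b21 b22 ->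
  [/\ a00 = b00, a01 = b01, a02 = b02, a10 = b10 &
   [/\ a11 = b11, a12 = b12, a20 = b20, a21 = b21 & a22 = b22]].
Proof.
move/matrixP => H.
move: (H o0 o0) (H o0 o1) (H o0 o2) (H o1 o0) (H o1 o1) (H o1 o2) (H o2 o0) (H o2 o1) (H o2 o2).
by rewrite !mxE /=.
Qed.

Lemma upper_mk3 a00 a01 a02 a10 a11 a12 a20 a21 a22 :
  upper (mk3 a00 a01 a02 a10 a11 a12 a20 a21 a22) <-> [/\ a10 = 0, a20 = 0 & a21 = 0].
Proof.
split.
  by move=> H; move: (H o1 o0 isT) (H o2 o0 isT) (H o2 o1 isT); rewrite !mxE.
case=> h1 h2 h3 i j; rewrite mxE.
by case: i => [[|[|[|i]]] Hi] //; case: j => [[|[|[|j]]] Hj].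
Qed.

Lemma tr_mk3 a00 a01 a02 a10 a11 a12 a20 a21 a22 :
  \tr (mk3 a00 a01 a02 a10 a11 a12 a20 a21 a22) = a00 + a11 + a22.
Proof. by rewrite /mxtrace !big_ord_recl big_ord0 !mxE /= addr0 addrA. Qed.

Lemma dmxE a b c : dmx a b c = mk3 a 0 0 0 b 0 0 0 c.
Proof. by apply/matrixP => i j; rewrite !mxE; case: i => [[|[|[|i]]] Hi] //; case: j => [[|[|[|j]]] Hj]. Qed.
Lemma nmxE x y z : nmx x y z = mk3 1 x y 0 1 z 0 0 1.
Proof. by apply/matrixP => i j; rewrite !mxE; case: i => [[|[|[|i]]] Hi] //; case: j => [[|[|[|j]]] Hj]. Qed.
Lemma w0E : w0 R = mk3 0 0 (-1) 0 (-1) 0 (-1) 0 0.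
Proof. by apply/matrixP => i j; rewrite !mxE; case: i => [[|[|[|i]]] Hi] //; case: j => [[|[|[|j]]] Hj]. Qed.
Lemma z2E : z2 R = mk3 0 0 1 (-1) 0 0 0 (-1) 0.
Proof. by apply/matrixP => i j; rewrite !mxE; case: i => [[|[|[|i]]] Hi] //; case: j => [[|[|[|j]]] Hj]. Qed.
Lemma oneE : (1%:M : 'M[R]_3) = mk3 1 0 0 0 1 0 0 0 1.
Proof. by apply/matrixP => i j; rewrite !mxE; case: i => [[|[|[|i]]] Hi] //; case: j => [[|[|[|j]]] Hj]. Qed.
Lemma scale_mk3 k a00 a01 a02 a10 a11 a12 a20 a21 a22 :
  k *: mk3 a00 a01 a02 a10 a11 a12 a20 a21 a22 = mk3 (k*a00) (k*a01) (k*a02) (k*a10) (k*a11) (k*a12) (k*a20) (k*a21) (k*a22).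
Proof. by apply/matrixP => i j; rewrite !mxE; case: i => [[|[|[|i]]] Hi] //; case: j => [[|[|[|j]]] Hj]. Qed.
Lemma add_mk3 a00 a01 a02 a10 a11 a12 a20 a21 a22 b00 b01 b02 b10 b11 b12 b20 b21 b22 :
  mk3 a00 a01 a02 a10 a11 a12 a20 a21 a22 + mk3 b00 b01 b02 b10 b11 b12 b20 b21 b22 =
  mk3 (a00+b00) (a01+b01) (a02+b02) (a10+b10) (a11+b11) (a12+b12) (a20+b20) (a21+b21) (a22+b22).
Proof. by apply/matrixP => i j; rewrite !mxE; case: i => [[|[|[|i]]] Hi] //; case: j => [[|[|[|j]]] Hj]. Qed.
Lemma zero_mk3 : (0 : 'M[R]_3) = mk3 0 0 0 0 0 0 0 0 0.
Proof. by apply/matrixP => i j; rewrite !mxE; case: i => [[|[|[|i]]] Hi] //; case: j => [[|[|[|j]]] Hj]. Qed.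

Lemma cube_root (r : R) : exists c : R, c ^+ 3 = r.
Proof.
have [] := @poly_ivt R ('X^3 - r%:P) (- (`|r| + 1)) (`|r| + 1).
- have := normr_ge0 r; lra.
- rewrite !hornerE; apply/andP; split.
  + have h0 := normr_ge0 r; have h1 := ler_norm r; have h2 : - r <= `|r| by rewrite -normrN ler_norm.
    nra.
  + have h0 := normr_ge0 r; have h1 := ler_norm r. nra.
- by move=> c _ /rootP; rewrite !hornerE => /eqP; rewrite subr_eq0 => /eqP hc; exists c.
Qed.

Ltac simp := rewrite ?(mul0r, mulr0, add0r, addr0, mul1r, mulr1, mulN1r, mulrN1, oppr0, opprK) /=.

Lemma nz_of (a b : R) : a * b = 1 -> a != 0.
Proof. by move=> H; apply/eqP => a0; move: H; rewrite a0 mul0r => /eqP; rewrite eq_sym oner_eq0. Qed.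
Lemma zero_of (a x : R) : a != 0 -> a * x = 0 -> x = 0.
Proof. by move=> a0 /eqP; rewrite mulf_eq0 (negbTE a0) /= => /eqP. Qed.

Arguments nz_of {a b}. Arguments zero_of {a x}.

Lemma U1 (k h : 'M[R]_3) : upper k -> \det k = 1 -> upper (k *m h) -> upper h.
Proof.
rewrite (mk3E k) (mk3E h) !upper_mk3 det_mk3 mul_mk3 upper_mk3.
move=> [-> -> ->] dk [e1 e2 e3].
have dk' : k o0 o0 * (k o1 o1 * k o2 o2) = 1 by rewrite -dk; ring.
have n0 := nz_of dk'. rewrite mulrC -mulrA in dk'. have n1 := nz_of dk'.
rewrite mulrC -mulrA in dk'. have n2 := nz_of dk'.
move: e1 e2 e3; simp => e1 e2 e3.
have h20 := zero_of n2 e2. have h21 := zero_of n2 e3.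
rewrite h20 mulr0 addr0 in e1. have h10 := zero_of n1 e1. by split.
Qed.

Lemma U2 (h p : 'M[R]_3) : upper p -> \det p = 1 -> upper (h *m p) -> upper h.
Proof.
rewrite (mk3E p) (mk3E h) !upper_mk3 det_mk3 mul_mk3 upper_mk3.
move=> [-> -> ->] dk [e1 e2 e3].
have dk' : p o0 o0 * (p o1 o1 * p o2 o2) = 1 by rewrite -dk; ring.
have n0 := nz_of dk'. rewrite mulrC -mulrA in dk'. have n1 := nz_of dk'.
rewrite mulrC -mulrA in dk'. have n2 := nz_of dk'.
move: e1 e2 e3; simp => e1 e2 e3.
rewrite mulrC in e1; have h10 := zero_of n0 e1.
rewrite mulrC in e2; have h20 := zero_of n0 e2.
rewrite h20 mul0r add0r mulrC in e3. have h21 := zero_of n1 e3. by split.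
Qed.

Lemma inG_unit (g : 'M[R]_3) : inG g -> g \in unitmx.
Proof. by move=> H; rewrite unitmxE H unitr1. Qed.

Lemma inG_mul (a b : 'M[R]_3) : inG a -> inG b -> inG (a *m b).
Proof. by rewrite /inG det_mulmx => -> ->; rewrite mulr1. Qed.

Lemma upper_mul (a b : 'M[R]_3) : upper a -> upper b -> upper (a *m b).
Proof.
rewrite (mk3E a) (mk3E b) mul_mk3 !upper_mk3 => -[-> -> ->] [-> -> ->]; simp; by split.
Qed.

Lemma inP_mul (a b : 'M[R]_3) : inP a -> inP b -> inP (a *m b).
Proof. by move=> [? ?] [? ?]; split; [apply: inG_mul | apply: upper_mul]. Qed.

Lemma cosetI (a b k : 'M[R]_3) : inG a -> inP k -> b = k *m a -> coset_eq a b.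
Proof. by move=> Ha Hk ->; rewrite /coset_eq mulmxK //; apply: inG_unit. Qed.

Lemma cosetE (a b : 'M[R]_3) : inG a -> coset_eq a b -> exists k, inP k /\ b = k *m a.
Proof.
move=> Ha H; exists (b *m invmx a); split => //.
by rewrite mulmxKV //; apply: inG_unit.
Qed.

Lemma coset_trans (a b c : 'M[R]_3) : inG a -> inG b -> coset_eq a b -> coset_eq b c -> coset_eq a c.
Proof.
move=> Ha Hb H1 H2.
have [k [Hk E1]] := cosetE Ha H1. have [k' [Hk' E2]] := cosetE Hb H2.
apply: (cosetI Ha (inP_mul Hk' Hk)); by rewrite E2 E1 mulmxA.
Qed.

Lemma inv_eq (a b : 'M[R]_3) : a *m b = 1%:M -> invmx a = b.
Proof.
move=> H; have [ua ub] := mulmx1_unit H.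
by rewrite -[invmx a]mulmx1 -H mulmxA mulVmx // mul1mx.
Qed.

Notation pt y z := ((1%:M, w0 R, z2 R *m nmx 0 y z) : triple R).

Lemma G1 : inG (R:=R) 1%:M. Proof. by rewrite /inG det1. Qed.
Lemma Gw0 : inG (w0 R). Proof. rewrite /inG w0E det_mk3; ring. Qed.
Lemma Gz2 : inG (z2 R). Proof. rewrite /inG z2E det_mk3; ring. Qed.
Lemma Gn (x y z : R) : inG (nmx x y z). Proof. rewrite /inG nmxE det_mk3; ring. Qed.
Lemma Gd (a b c : R) : a * b * c = 1 -> inG (dmx a b c). Proof. rewrite /inG dmxE det_mk3 => <-; ring. Qed.
Lemma upper1 : upper (R:=R) 1%:M. Proof. by rewrite oneE upper_mk3. Qed.
Lemma w0w0 : w0 R *m w0 R = 1%:M. Proof. by rewrite w0E oneE mul_mk3; simp. Qed.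

Lemma orbit_inv (y z y' z' : R) h : inG h -> X_eq (act (pt y z) h) (pt y' z') ->
  exists a b c, [/\ a*b*c = 1, h = dmx a b c, y'*a = y*c & z'*b = z*c].
Proof.
move=> Hh [C1 C2 C3]; rewrite /act /t1 /t2 /t3 /= in C1 C2 C3.
have [k1 [[dk1 uk1] E1]] := cosetE (inG_mul G1 Hh) C1.
have uh : upper h.
  apply: (U1 uk1 dk1); rewrite -(mul1mx h) -E1; exact: upper1.
have [k2 [[dk2 uk2] E2]] := cosetE (inG_mul Gw0 Hh) C2.
have uh' : upper (w0 R *m h *m w0 R).
  apply: (U1 uk2 dk2); rewrite mulmxA mulmxA -(mulmxA k2) -E2 w0w0; exact: upper1.
have [k3 [[dk3 uk3] E3]] := cosetE (inG_mul (inG_mul Gz2 (Gn _ _ _)) Hh) C3.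
move: uh uh' Hh E3 dk3 uk3; rewrite /inG (mk3E h) (mk3E k3) w0E mul_mk3 mul_mk3 !upper_mk3; simp.
move=> [-> -> ->] [-> -> ->] dh E3 _ [k10 k20 k21]; rewrite k10 k20 k21 in E3.
move: dh E3; rewrite det_mk3 z2E !nmxE !mul_mk3; simp => dh /mk3_inj.
move=> [_ _ _ e4 [e5 e6 _ e7 e8]].
exists (h o0 o0), (h o1 o1), (h o2 o2); split.
- by rewrite -dh mulrA.
- by rewrite dmxE.
- have b0 : h o1 o1 != 0 by apply: (@nz_of _ (h o0 o0 * h o2 o2)); rewrite -dh; ring.
  have k12 : k3 o1 o2 = 0.
    by apply: (zero_of (a:= - h o1 o1)); rewrite ?oppr_eq0 // mulrC e5.
  rewrite k12 mul0r addr0 in e6.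
  have ka : k3 o1 o1 * h o0 o0 = 1 by apply: oppr_inj; rewrite e4 mulrN.
  by rewrite -[y']opprK e6 -[RHS]mul1r -ka; ring.
- have kb : k3 o2 o2 * h o1 o1 = 1 by apply: oppr_inj; rewrite e7 mulrN.
  by rewrite -[z']opprK e8 -[RHS]mul1r -kb; ring.
Qed.

Lemma inPd (a b c : R) : a * b * c = 1 -> inP (dmx a b c).
Proof. by move=> H; split; [apply: Gd | rewrite dmxE upper_mk3]. Qed.

Lemma nz3 (a b c : R) : a * b * c = 1 -> [/\ a != 0, b != 0 & c != 0].
Proof.
move=> H; split.
- by apply: (@nz_of _ (b * c)); rewrite -H mulrA.
- by apply: (@nz_of _ (a * c)); rewrite -H; ring.
- by apply: (@nz_of _ (a * b)); rewrite -H; ring.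
Qed.

Lemma inv3 (a b c : R) : a * b * c = 1 -> a^-1 * b^-1 * c^-1 = 1.
Proof. by move=> H; rewrite -!invfM H invr1. Qed.

Lemma orbit_conv (a b c y z y' z' : R) : a*b*c = 1 -> y'*a = y*c -> z'*b = z*c ->
  X_eq (act (pt y z) (dmx a b c)) (pt y' z').
Proof.
move=> H Hy Hz; have [a0 b0 c0] := nz3 H.
rewrite /act /t1 /t2 /t3 /=; split.
- apply: (cosetI (k := dmx a^-1 b^-1 c^-1)); first by rewrite mul1mx; apply: Gd.
    by apply: inPd; apply: inv3.
  by rewrite oneE !dmxE !mul_mk3; simp; congr mk3; field.
- apply: (cosetI (k := dmx c^-1 b^-1 a^-1)); first by apply: inG_mul; [apply: Gw0 | apply: Gd].
    by apply: inPd; rewrite -(inv3 H); ring.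
  by rewrite w0E !dmxE !mul_mk3; simp; congr mk3; field.
- apply: (cosetI (k := dmx c^-1 a^-1 b^-1)).
    by apply: inG_mul; [apply: inG_mul; [apply: Gz2 | apply: Gn] | apply: Gd].
    by apply: inPd; rewrite -(inv3 H); ring.
  rewrite z2E !nmxE !dmxE !mul_mk3; simp; congr mk3.
  all: try by field.
  + have -> : y' = y * c / a by rewrite -Hy; field.
    by field.
  + have -> : z' = z * c / b by rewrite -Hz; field.
    by field.
Qed.

Lemma Klem (u00 u01 u02 u11 u12 u22 a b c y z : R) : a * b * c = 1 ->
  u12 = u11 * z * c / b -> u02 = u00 * y * c / a + u01 * z * c / b ->
  z2 R *m mk3 u00 u01 u02 0 u11 u12 0 0 u22 =
  mk3 (u22/c) 0 0 0 (u00/a) (u01/b) 0 0 (u11/b) *m (z2 R *m nmx 0 y z *m dmx a b c).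
Proof.
move=> H -> ->; have [a0 b0 c0] := nz3 H.
rewrite z2E nmxE dmxE !mul_mk3; simp; congr mk3; try field; by rewrite ?a0 ?b0 ?c0.
Qed.

Definition b2r (b : bool) : R := if b then 1 else 0.

Lemma decomp' (u00 u01 u02 u11 u12 u22 : R) : u00 * u11 * u22 = 1 ->
  exists (a b c : R) (bY bZ : bool) (K : 'M[R]_3),
  [/\ a * b * c = 1, inP K & z2 R *m mk3 u00 u01 u02 0 u11 u12 0 0 u22 =
     K *m (z2 R *m nmx 0 (b2r bY) (b2r bZ) *m dmx a b c)].
Proof.
move=> du; have [n0 n1 n2] := nz3 du.
set Z := u12 / u11. set Y := u02 / u00 - u01 * u12 / (u00 * u11).
have Kok : forall a b c : R, a * b * c = 1 -> inP (mk3 (u22/c) 0 0 0 (u00/a) (u01/b) 0 0 (u11/b)).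
  move=> a b c H; have [a0 b0 c0] := nz3 H; split; last by rewrite upper_mk3.
  rewrite /inG det_mk3; transitivity ((u00*u11*u22)/(a*b*c)); last by rewrite du H divr1.
  by field; rewrite ?a0 ?b0 ?c0.
have hZ : u12 = u11 * Z by rewrite /Z; field.
have hY : u02 = u00 * Y + u01 * Z by rewrite /Y /Z; field; rewrite n0 n1.
clearbody Y Z; rewrite hZ hY; clear hZ hY.
have KL : forall a b c (bY bZ : bool), a * b * c = 1 ->
   u11 * Z = u11 * b2r bZ * c / b -> u00 * Y + u01 * Z = u00 * b2r bY * c / a + u01 * b2r bZ * c / b ->
   exists (a b c : R) (bY bZ : bool) (K : 'M[R]_3),
  [/\ a * b * c = 1, inP K & z2 R *m mk3 u00 u01 (u00 * Y + u01 * Z) 0 u11 (u11 * Z) 0 0 u22 =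
     K *m (z2 R *m nmx 0 (b2r bY) (b2r bZ) *m dmx a b c)].
  move=> a b c bY bZ H e1 e2; exists a, b, c, bY, bZ, (mk3 (u22/c) 0 0 0 (u00/a) (u01/b) 0 0 (u11/b)).
  by split => //; [apply: Kok | apply: Klem].
have [Y0|Y0] := eqVneq Y 0; have [Z0|Z0] := eqVneq Z 0.
- apply: (KL 1 1 1 false false); rewrite /b2r ?Y0 ?Z0; ring.
- apply: (KL Z Z^-1 1 false true); rewrite /b2r ?Y0; try field; by rewrite ?Z0.
- apply: (KL Y^-1 Y 1 true false); rewrite /b2r ?Z0; try field; by rewrite ?Y0.
- have [c hc] := cube_root (Y * Z).
  have c0 : c != 0 by apply/eqP => c0; move: hc; rewrite c0 expr0n /= => /esym/eqP; rewrite mulf_eq0 (negbTE Y0) (negbTE Z0).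
  apply: (KL (c / Y) (c / Z) c true true); rewrite /b2r; try field; rewrite ?Y0 ?Z0 ?c0 //.
  transitivity (c ^+ 3 / (Y * Z)); first by field; rewrite ?Y0 ?Z0.
  by rewrite hc divff // mulf_neq0.
Qed.

Lemma decomp (u : 'M[R]_3) : inP u -> exists (a b c : R) (bY bZ : bool) (K : 'M[R]_3),
  [/\ a * b * c = 1, inP K & z2 R *m u = K *m (z2 R *m nmx 0 (b2r bY) (b2r bZ) *m dmx a b c)].
Proof.
rewrite (mk3E u) /inP /inG upper_mk3 det_mk3 => -[du [e1 e2 e3]]; rewrite e1 e2 e3 in du *.
apply: decomp'; by rewrite -du; simp; rewrite mulrA.
Qed.

Lemma X_trans (x y w : triple R) : in_X x -> in_X y -> X_eq x y -> X_eq y w -> X_eq x w.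
Proof.
move=> [a1 a2 a3] [b1 b2 b3] [c1 c2 c3] [d1 d2 d3]; rewrite /X_eq; split; [exact: (coset_trans a1 b1 c1 d1) | exact: (coset_trans a2 b2 c2 d2) | exact: (coset_trans a3 b3 c3 d3)].
Qed.

Lemma inX_act (x : triple R) h : in_X x -> inG h -> in_X (act x h).
Proof. by move=> [? ? ?] Hh; rewrite /in_X; split; apply: inG_mul. Qed.

Lemma inX_pt (y z : R) : in_X (pt y z).
Proof. rewrite /in_X; split; [exact: G1 | exact: Gw0 | apply: inG_mul; [exact: Gz2 | exact: Gn]]. Qed.

Lemma inP_inv (M : 'M[R]_3) : inP M -> inP (invmx M).
Proof.
move=> [GM UM]; have uM := inG_unit GM; have e : invmx M *m M = 1%:M := mulVmx uM.
split.
- by rewrite /inG; have := congr1 determinant e; rewrite det_mulmx GM mulr1 det1.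
- by apply: (U2 UM GM); rewrite e; exact: upper1.
Qed.

Lemma cover x : in_S (w0 R) (z2 R) x -> exists bY bZ : bool, same_orbit (pt (b2r bY) (b2r bZ)) x.
Proof.
move=> [HX [p [q [h [[Gp Up] [Gq Uq] Gh E]]]]].
set u := q *m invmx p.
have up : u *m p = q by rewrite mulmxKV // inG_unit.
have Pu : inP u.
  have Gu : inG u.
    move: Gq; rewrite /inG -up det_mulmx Gp mulr1 //.
  by split => //; apply: (U2 Up Gp); rewrite up.
have [a [b [c [bY [bZ [K [H PK EK]]]]]]] := decomp Pu.
have [a0 b0 c0] := nz3 H.
have Gd' : inG (dmx a b c) by apply: Gd.
have Gg : inG (dmx a b c *m p *m h) by apply: inG_mul => //; apply: inG_mul.
exists bY, bZ, (dmx a b c *m p *m h); split => //.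
have inX1 : in_X ((1%:M, w0 R *m p, z2 R *m q) : triple R).
  by rewrite /in_X; split; [exact: G1 | apply: inG_mul => //; exact: Gw0 | apply: inG_mul => //; exact: Gz2].
apply: (X_trans (y := act (1%:M, w0 R *m p, z2 R *m q) h)); last exact: E.
- by apply: inX_act => //; apply: inX_pt.
- by apply: inX_act.
rewrite /X_eq /act /t1 /t2 /t3 /=; split.
- have GM : inG (dmx a b c *m p) by apply: inG_mul.
  apply: (cosetI (k := invmx (dmx a b c *m p))); first by rewrite mul1mx.
    by apply: inP_inv; split => //; apply: upper_mul => //; rewrite dmxE upper_mk3.
  by rewrite !mul1mx mulmxA mulVmx ?mul1mx // inG_unit.
- apply: (cosetI (k := dmx c^-1 b^-1 a^-1)); first by apply: inG_mul => //; exact: Gw0.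
    by apply: inPd; rewrite -(inv3 H); ring.
  have kd : dmx c^-1 b^-1 a^-1 *m w0 R *m dmx a b c = w0 R.
    by rewrite !dmxE w0E !mul_mk3; simp; congr mk3; field.
  by rewrite !mulmxA kd.
- apply: (cosetI (k := K)) => //.
    by apply: inG_mul => //; apply: inG_mul; [exact: Gz2 | exact: Gn].
  rewrite !mulmxA in EK.
  by rewrite -up !mulmxA EK.
Qed.

Definition z2T : 'M[R]_3 := mk3 0 (-1) 0 0 0 (-1) 1 0 0.
Lemma invw0 : invmx (w0 R) = w0 R. Proof. exact: inv_eq w0w0. Qed.
Lemma invz2n (y z : R) : invmx (z2 R *m nmx 0 y z) = nmx 0 (-y) (-z) *m z2T.
Proof. apply: inv_eq; rewrite /z2T z2E !nmxE oneE !mul_mk3; simp; congr mk3; ring. Qed.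

Lemma lie_char (y z : R) Y : lie_stab (pt y z) Y <->
  exists p q r, [/\ p + q + r = 0, Y = dmx p q r, y * (r - p) = 0 & z * (r - q) = 0].
Proof.
rewrite /lie_stab /t1 /t2 /t3 /= invmx1 invw0 invz2n mul1mx mulmx1 (mk3E Y).
move: (Y o0 o0) (Y o0 o1) (Y o0 o2) (Y o1 o0) (Y o1 o1) (Y o1 o2) (Y o2 o0) (Y o2 o1) (Y o2 o2).
move=> a00 a01 a02 a10 a11 a12 a20 a21 a22.
rewrite /z2T tr_mk3 w0E z2E !nmxE !mul_mk3; simp.
split.
  move=> [tr /upper_mk3 [e1 e2 e3] /upper_mk3 u2 /upper_mk3 u3].
  rewrite e1 e2 e3 in tr u2 u3 *; simp.
  case: u2 => f1 f2 f3; rewrite f1 f2 f3 in u3 *; case: u3 => g1 g2 _.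
  exists a00, a11, a22; split => //.
  - by rewrite dmxE.
  - by rewrite -oppr0 -g1; ring.
  - by rewrite -oppr0 -g2; ring.
move=> [p [q [r [tr]]]]; rewrite dmxE => /mk3_inj [-> -> -> -> [-> -> -> -> ->]] hy hz.
split => //; try (apply/upper_mk3; split => //).
all: simp => //.
- by rewrite -oppr0 -hy; ring.
- by rewrite -oppr0 -hz; ring.
Qed.

Lemma stab_char (y z : R) h : stab (pt y z) h <->
  exists a b c, [/\ a*b*c = 1, h = dmx a b c, y*a = y*c & z*b = z*c].
Proof.
split.
- by move=> [Gh HX]; apply: orbit_inv.
- move=> [a [b [c [H -> hy hz]]]]; split; first exact: Gd.
  exact: orbit_conv.
Qed.

Lemma X_refl (x : triple R) : in_X x -> X_eq x x.
Proof.
have P1 : inP (R:=R) 1%:M by split; [exact: G1 | exact: upper1].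
move=> [g1 g2 g3]; rewrite /X_eq; split; apply: (cosetI (k := 1%:M)) => //; by rewrite mul1mx.
Qed.

Lemma inS_pt (y z : R) : in_S (w0 R) (z2 R) (pt y z).
Proof.
split; first exact: inX_pt.
exists 1%:M, (nmx 0 y z), 1%:M; split.
- split; [exact: G1 | exact: upper1].
- split; [exact: Gn | by rewrite nmxE upper_mk3].
- exact: G1.
- rewrite /act /t1 /t2 /t3 /= !mulmx1; apply: X_refl; exact: inX_pt.
Qed.

Lemma cube1 (c : R) : c * c * c = 1 -> c = 1.
Proof.
move=> H; have : (c - 1) * (c ^+ 2 + c + 1) = c * c * c - 1 by ring.
rewrite H subrr.
move/eqP; rewrite mulf_eq0 => /orP [/eqP|]; first by move/eqP; rewrite subr_eq0 => /eqP.
have : 0 < c ^+ 2 + c + 1 by nra.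
by move=> /lt0r_neq0 /negbTE ->.
Qed.

Lemma noorb (y z y' z' : R) : (y' = 0 /\ y = 1) \/ (z' = 0 /\ z = 1) \/ (y' = 1 /\ y = 0) ->
  ~ same_orbit (pt y z) (pt y' z').
Proof.
move=> hyp [h [Gh HX]]; have [a [b [c [H _ hy hz]]]] := orbit_inv Gh HX.
have [a0 b0 c0] := nz3 H.
case: hyp => [[e1 e2]|[[e1 e2]|[e1 e2]]]; subst.
- by move: hy; rewrite mul0r mul1r => /esym/eqP; rewrite (negbTE c0).
- by move: hz; rewrite mul0r mul1r => /esym/eqP; rewrite (negbTE c0).
- by move: hy; rewrite mul0r mul1r => /eqP; rewrite (negbTE a0).
Qed.

Lemma dim1 : orbit_dim (pt 1 1) 8.
Proof.
exists [::]; split => //; first exact: nil_free.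
move=> Y; rewrite lie_char span_nil memv0; split.
- move=> [p [q [r [tr -> hy hz]]]]; rewrite !mul1r in hy hz.
  have r0 : r = 0 by lra.
  have p0 : p = 0 by lra.
  have q0 : q = 0 by lra.
  by rewrite p0 q0 r0 dmxE -zero_mk3.
- move/eqP => ->; exists 0, 0, 0; split => //; first by rewrite !addr0.
  by rewrite dmxE -zero_mk3.
  by rewrite subr0 mulr0.
  by rewrite subr0 mulr0.
Qed.

Lemma dim2 : orbit_dim (pt 0 1) 7.
Proof.
exists [:: dmx (-2) 1 1]; split => //.
  rewrite seq1_free; apply/eqP; rewrite dmxE zero_mk3 => /mk3_inj [_ _ _ _ [e _ _ _ _]].
  by move/eqP: e; rewrite oner_eq0.
move=> Y; rewrite lie_char span_seq1; split.
- move=> [p [q [r [tr -> hy hz]]]]; rewrite !mul1r in hz.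
  apply/vlineP; exists q; rewrite !dmxE scale_mk3; congr mk3; lra.
- move/vlineP => [k ->]; exists (-2 * k), k, k; split.
  + lra.
  + by rewrite !dmxE scale_mk3; congr mk3; ring.
  + by rewrite mul0r.
  + by rewrite subrr mulr0.
Qed.

Lemma dim3 : orbit_dim (pt 1 0) 7.
Proof.
exists [:: dmx 1 (-2) 1]; split => //.
  rewrite seq1_free; apply/eqP; rewrite dmxE zero_mk3 => /mk3_inj [e _ _ _ _].
  by move/eqP: e; rewrite oner_eq0.
move=> Y; rewrite lie_char span_seq1; split.
- move=> [p [q [r [tr -> hy hz]]]]; rewrite !mul1r in hy.
  apply/vlineP; exists p; rewrite !dmxE scale_mk3; congr mk3; lra.
- move/vlineP => [k ->]; exists k, (-2 * k), k; split.
  + lra.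
  + by rewrite !dmxE scale_mk3; congr mk3; ring.
  + by rewrite subrr mulr0.
  + by rewrite mul0r.
Qed.

Lemma dim4 : orbit_dim (pt 0 0) 6.
Proof.
exists [:: dmx 1 (-1) 0; dmx 0 1 (-1)]; split => //.
  rewrite free_cons seq1_free span_seq1; apply/andP; split.
    apply/vlineP => -[k]; rewrite !dmxE scale_mk3 => /mk3_inj [e _ _ _ _].
    by move/eqP: e; rewrite mulr0 oner_eq0.
  apply/eqP; rewrite dmxE zero_mk3 => /mk3_inj [_ _ _ _ [e _ _ _ _]].
  by move/eqP: e; rewrite oner_eq0.
move=> Y; rewrite lie_char span_cons span_seq1; split.
- move=> [p [q [r [tr -> hy hz]]]].
  apply/memv_addP; exists (p *: dmx 1 (-1) 0); first exact/memvZ/memv_line.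
  exists ((p + q) *: dmx 0 1 (-1)); first exact/memvZ/memv_line.
  rewrite !dmxE !scale_mk3 add_mk3; congr mk3; lra.
- move/memv_addP => [u /vlineP [k1 ->] [w /vlineP [k2 ->] ->]].
  exists k1, (k2 - k1), (- k2); split.
  + ring.
  + by rewrite !dmxE !scale_mk3 add_mk3; congr mk3; ring.
  + by rewrite mul0r.
  + by rewrite mul0r.
Qed.

Lemma stab1 h : stab (pt 1 1) h <-> h = 1%:M.
Proof.
rewrite stab_char; split.
- move=> [a [b [c [H -> hy hz]]]]; rewrite !mul1r in hy hz; subst.
  by rewrite (cube1 H) dmxE oneE.
- move=> ->; exists 1, 1, 1; split => //; first by rewrite !mulr1.
  by rewrite dmxE oneE.
Qed.

Lemma stab2 h : stab (pt 0 1) h <-> exists a : R, a != 0 /\ h = dmx (1 / a ^+ 2) a a.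
Proof.
rewrite stab_char; split.
- move=> [a [b [c [H -> hy hz]]]]; rewrite !mul1r in hz; subst.
  have [a0 b0 _] := nz3 H.
  exists c; split => //; congr dmx.
  by apply: (mulIf (x := c ^+ 2)); rewrite ?expf_neq0 // -H; field.
- move=> [a [a0 ->]]; exists (1 / a ^+ 2), a, a; split => //.
  + by field.
  + by rewrite !mul0r.
Qed.

Lemma stab3 h : stab (pt 1 0) h <-> exists a : R, a != 0 /\ h = dmx a (1 / a ^+ 2) a.
Proof.
rewrite stab_char; split.
- move=> [a [b [c [H -> hy hz]]]]; rewrite !mul1r in hy; subst.
  have [_ b0 c0] := nz3 H.
  exists c; split => //; congr dmx.
  by apply: (mulIf (x := c ^+ 2)); rewrite ?expf_neq0 // -H; field.
- move=> [a [a0 ->]]; exists a, (1 / a ^+ 2), a; split => //.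
  + by field.
  + by rewrite !mul0r.
Qed.

Lemma stab4 h : stab (pt 0 0) h <-> inD h.
Proof.
rewrite stab_char; split.
- by move=> [a [b [c [H -> _ _]]]]; exists a, b, c.
- move=> [a [b [c [H ->]]]]; exists a, b, c; split => //; by rewrite !mul0r.
Qed.
End S.

Unset Implicit Arguments. Set Strict Implicit.

Theorem mainTheorem7 (R : realType) :
  let x1 : triple R := (1%:M, w0 R, z2 R *m nmx 0 1 1) in
  let x2 : triple R := (1%:M, w0 R, z2 R *m nmx 0 0 1) in
  let x3 : triple R := (1%:M, w0 R, z2 R *m nmx 0 1 0) in
  let x4 : triple R := (1%:M, w0 R, z2 R *m nmx 0 0 0) in
  (* the four points lie in S_{w0,z2} *)
  [/\ in_S (w0 R) (z2 R) x1, in_S (w0 R) (z2 R) x2,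
      in_S (w0 R) (z2 R) x3 & in_S (w0 R) (z2 R) x4] /\
  (* S_{w0,z2} is covered by their orbits *)
  (forall x, in_S (w0 R) (z2 R) x ->
     [\/ same_orbit x1 x, same_orbit x2 x, same_orbit x3 x | same_orbit x4 x]) /\
  (* the four orbits are pairwise distinct (hence disjoint) *)
  (~ same_orbit x1 x2 /\ ~ same_orbit x1 x3 /\ ~ same_orbit x1 x4 /\
   ~ same_orbit x2 x3 /\ ~ same_orbit x2 x4 /\ ~ same_orbit x3 x4) /\
  (* dimensions *)
  [/\ orbit_dim x1 8, orbit_dim x2 7, orbit_dim x3 7 & orbit_dim x4 6] /\
  (* stabilizers *)
  [/\ (forall h, stab x1 h <-> h = 1%:M),
      (forall h, stab x2 h <-> exists a : R, a != 0 /\ h = dmx (1 / a ^+ 2) a a),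
      (forall h, stab x3 h <-> exists a : R, a != 0 /\ h = dmx a (1 / a ^+ 2) a) &
      (forall h, stab x4 h <-> inD h)].
Proof.
move=> x1 x2 x3 x4; rewrite /x1 /x2 /x3 /x4.
split; first by split; apply: inS_pt.
split.
  move=> x /cover [bY [bZ Ho]]; case: bY bZ Ho => [] [] Ho.
  - by constructor 1; exact: Ho.
  - by constructor 3; exact: Ho.
  - by constructor 2; exact: Ho.
  - by constructor 4; exact: Ho.
split.
  split; first by apply: noorb; left.
  split; first by apply: noorb; right; left.
  split; first by apply: noorb; left.
  split; first by apply: noorb; right; right.
  split; first by apply: noorb; right; left.
  by apply: noorb; left.
split; first by split; [exact: dim1 | exact: dim2 | exact: dim3 | exact: dim4].
split; [exact: stab1 | exact: stab2 | exact: stab3 | exact: stab4].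
Qed.
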